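(* In the $q$-shuffle algebra $\mathbb V$, the following three subalgebras coincide: (i) the subalgebra generated by $\{C_n\}_{n=1}^\infty$; (ii) the subalgebra generated by $\{D_n\}_{n=1}^\infty$; (iii) the subalgebra generated by $\{\tilde G_n\}_{n=1}^\infty$.
   Context: Let $\mathbb F$ be a field and let $q\in\mathbb F$ be nonzero and not a root of unity. Let $[m]_q=(q^m-q^{-m})/(q-q^{-1})$. Let $\mathbb V$ be the free associative $\mathbb F$-algebra on noncommuting $x,y$, with basis the words (including $1$). Juxtaposition denotes concatenation. Set $\langle x,x\rangle=\langle y,y\rangle=2$ and $\langle x,y\rangle=\langle y,x\rangle=-2$. The $q$-shuffle product $\star$ is the bilinear product determined as follows: - $1\star v=v\star 1=v$; - for nontrivial words $u=u_1\cdots u_r$ and $v=v_1\cdots v_s$, $$u\star v=u_1((u_2\cdots u_r)\star v)+v_1(u\star(v_2\cdots v_s))q^{\langle u_1,v_1\rangle+\cdots+\langle u_r,v_1\rangle}.$$ This makes $\mathbb V$ an associative algebra, the $q$-shuffle algebra. Subalgebras are taken with respect to $\star$. For $k\in\mathbb N$, let $\tilde G_k=xyxy\cdots xy$ be the word of length $2k$, with $\tilde G_0=1$. Define $D_0=1$ and, for $n\ge1$, define $D_n$ recursively by $\sum_{i=0}^n D_i\star\tilde G_{n-i}=0$. Let $\overline x=1$ and $\overline y=-1$. A word $v_1\cdots v_m$ is Catalan if $\overline v_1+\cdots+\overline v_i\ge0$ for $1\le i\le m-1$ and $\overline v_1+\cdots+\overline v_m=0$. For $n\in\mathbb N$, $$C_n=\sum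 v_1\cdots v_{2n}\,[1]_q[1+\overline v_1]_q\cdots[1+\overline v_1+\cdots+\overline v_{2n}]_q,$$ where the sum is over Catalan words of length $2n$. *)

(* Defs.v *)
From mathcomp Require Import all_boot all_order all_algebra.
Set Implicit Arguments. Unset Strict Implicit. Unset Printing Implicit Defensive.
Import Order.TTheory GRing.Theory Num.Theory.
Local Open Scope ring_scope.

(* Words in x,y : x = true, y = false. *)
Definition word := seq bool.

Section QShuffle.
Variables (F : fieldType) (q : F).

(* An element of V is represented by a finite formal sum: a list of
   (coefficient, word) pairs; its value is the coefficient function [ev]. *)
Definition Vrep := seq (F * word).

Definition ev (p : Vrep) (w : word) : F := \sum_(e <- p | e.2 == w) e.1.

Definition Vone : Vrep := [:: (1, [::])].

Definition Vscale (c : F) (p : Vrep) : Vrep := [seq (c * e.1, e.2) | e <- p].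

Definition bil (a b : bool) : int := if a == b then 2 else -2.
Definition expo (u : word) (b : bool) : int := \sum_(a <- u) bil a b.

Fixpoint wstar (u : word) : word -> Vrep :=
  match u with
  | [::] => fun v => [:: (1, v)]
  | a :: u' =>
      fix g (v : word) : Vrep :=
        match v with
        | [::] => [:: (1, a :: u')]
        | b :: v' =>
            [seq (c.1, a :: c.2) | c <- wstar u' v] ++
            [seq (c.1 * q ^ (expo (a :: u') b), b :: c.2) | c <- g v']
        end
  end.

Definition Vstar (p r : Vrep) : Vrep :=
  flatten [seq [seq (c.1 * d.1 * e.1, e.2) | e <- wstar c.2 d.2] | c <- p, d <- r].

(* product g_{i_1+1} * ... * g_{i_k+1} of generators (indices >= 1) *)
Definition Vprod (g : nat -> Vrep) (l : seq nat) : Vrep :=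
  foldr (fun i acc => Vstar (g i.+1) acc) Vone l.

(* p lies in the (unital) subalgebra generated by {g n}_{n >= 1}:
   p is a linear combination of finite star-products of generators. *)
Definition in_subalg (g : nat -> Vrep) (p : Vrep) : Prop :=
  exists L : seq (F * seq nat),
    ev p =1 ev (flatten [seq Vscale c.1 (Vprod g c.2) | c <- L]).

Definition Gt (n : nat) : Vrep := [:: (1, flatten (nseq n [:: true; false]))].

Definition bar (b : bool) : int := if b then 1 else -1.
Definition psum (w : word) (i : nat) : int := \sum_(j < i) bar (nth false w j).
Definition catalan (w : word) : bool :=
  all (fun i => 0 <= psum w i) (iota 1 (size w).-1) && (psum w (size w) == 0).

Definition qint (m : int) : F := (q ^ m - q ^ (- m)) / (q - q^-1).

Fixpoint allwords (k : nat) : seq word :=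
  if k is k'.+1 then [seq b :: w | b <- [:: true; false], w <- allwords k']
  else [:: [::]].

Definition Ccoef (w : word) : F := \prod_(i < (size w).+1) qint (1 + psum w i).

Definition Cn (n : nat) : Vrep :=
  [seq (Ccoef w, w) | w <- allwords (2 * n) & catalan w].

End QShuffle.

(* Main.v *)
Require Import Defs.
From mathcomp Require Import all_boot all_order all_algebra.
From mathcomp Require Import zify ring lra.
Set Implicit Arguments. Unset Strict Implicit. Unset Printing Implicit Defensive.
Import Order.TTheory GRing.Theory Num.Theory.
Local Open Scope ring_scope.

Section Lin.
Variable F : fieldType.

Definition lin (p : Vrep F) (f : word -> F) : F := \sum_(c <- p) c.1 * f c.2.
Definition eqv (p r : Vrep F) := forall f, lin p f = lin r f.

Lemma lin_nil f : lin [::] f = 0. Proof. by rewrite /lin big_nil. Qed.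
Lemma lin_cons c p f : lin (c :: p) f = c.1 * f c.2 + lin p f.
Proof. by rewrite /lin big_cons. Qed.
Lemma lin_cat p r f : lin (p ++ r) f = lin p f + lin r f.
Proof. by rewrite /lin big_cat. Qed.
Lemma lin_flatten (s : seq (Vrep F)) f : lin (flatten s) f = \sum_(p <- s) lin p f.
Proof. by rewrite /lin big_flatten. Qed.
Lemma lin_ext p f g : f =1 g -> lin p f = lin p g.
Proof. by move=> e; apply: eq_bigr => c _; rewrite e. Qed.
Lemma lin_ext_in p f g : (forall c, c \in p -> f c.2 = g c.2) -> lin p f = lin p g.
Proof. by move=> e; apply: eq_big_seq => c /e ->. Qed.
Lemma lin_scale c p f : lin (Vscale c p) f = c * lin p f.
Proof. by rewrite /lin /Vscale big_map mulr_sumr; apply: eq_bigr => d _ /=; rewrite mulrA. Qed.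
Lemma lin_add p f g : lin p (fun u => f u + g u) = lin p f + lin p g.
Proof. by rewrite /lin -big_split; apply: eq_bigr => c _; rewrite mulrDr. Qed.
Lemma lin_mull p a f : lin p (fun u => a * f u) = a * lin p f.
Proof. by rewrite /lin mulr_sumr; apply: eq_bigr => c _; rewrite mulrCA. Qed.
Lemma lin_sum p (I : Type) (s : seq I) (f : I -> word -> F) :
  lin p (fun u => \sum_(i <- s) f i u) = \sum_(i <- s) lin p (f i).
Proof.
rewrite /lin exchange_big /=; apply: eq_bigr => c _; by rewrite mulr_sumr.
Qed.
Lemma lin_zero p : lin p (fun _ => 0) = 0.
Proof. by rewrite /lin big1 // => c _; rewrite mulr0. Qed.
Lemma lin_swap p r (H : word -> word -> F) :
  lin p (fun u => lin r (fun v => H u v)) = lin r (fun v => lin p (fun u => H u v)).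
Proof.
rewrite /lin; under eq_bigr do rewrite mulr_sumr.
rewrite exchange_big /=; apply: eq_bigr => d _; rewrite mulr_sumr.
by apply: eq_bigr => c _; rewrite mulrCA.
Qed.

Lemma ev_lin p w : ev p w = lin p (fun u => (u == w)%:R).
Proof.
rewrite /ev /lin big_mkcond /=; apply: eq_bigr => c _.
by case: (c.2 == w); rewrite ?mulr1 ?mulr0.
Qed.

Lemma sum_delta (s : seq word) (x : word) (X : word -> F) :
  uniq s -> x \in s -> \sum_(w <- s) (x == w)%:R * X w = X x.
Proof.
move=> us xs; rewrite (perm_big _ (perm_to_rem xs)) big_cons eqxx mul1r.
rewrite big1_seq; first exact: addr0.
move=> w /andP [_ wr].
case: eqP => [exw|]; last by rewrite mul0r.
by move: wr; rewrite -exw mem_rem_uniqF.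
Qed.

Lemma lin_supp p (s : seq word) f :
  uniq s -> (forall c, c \in p -> c.2 \in s) ->
  lin p f = \sum_(w <- s) ev p w * f w.
Proof.
move=> us; elim: p => [|c p IH] sub.
  by rewrite lin_nil big1 // => w _; rewrite /ev big_nil mul0r.
rewrite lin_cons IH; last by move=> d dp; apply: sub; rewrite inE dp orbT.
have -> : \sum_(w <- s) ev (c :: p) w * f w =
   \sum_(w <- s) ((c.2 == w)%:R * (c.1 * f w) + ev p w * f w).
  apply: eq_bigr => w _; rewrite /ev big_cons.
  by case: (c.2 == w); rewrite ?mul1r ?mul0r ?add0r // mulrDl.
rewrite big_split /= sum_delta //; apply: sub; exact: mem_head.
Qed.

Lemma ev_eqv p r : ev p =1 ev r -> eqv p r.
Proof.
move=> e f; set s := undup [seq c.2 | c <- p ++ r].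
have us : uniq s by apply: undup_uniq.
rewrite (@lin_supp p s) ?(@lin_supp r s) //.
- by apply: eq_bigr => w _; rewrite e.
- move=> c cr; rewrite mem_undup; apply/mapP; exists c => //; by rewrite mem_cat cr orbT.
- move=> c cp; rewrite mem_undup; apply/mapP; exists c => //; by rewrite mem_cat cp.
Qed.

Lemma eqv_ev p r : eqv p r -> ev p =1 ev r.
Proof. by move=> e w; rewrite !ev_lin e. Qed.

Lemma eqv_refl p : eqv p p. Proof. by []. Qed.
Lemma eqv_sym p r : eqv p r -> eqv r p. Proof. by move=> e f; rewrite e. Qed.
Lemma eqv_trans p r s : eqv p r -> eqv r s -> eqv p s.
Proof. by move=> e1 e2 f; rewrite e1 e2. Qed.

End Lin.

Section Assoc.
Variables (F : fieldType) (q : F).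
Hypothesis q0 : q != 0.

Notation wstar := (wstar q).
Notation Vstar := (Vstar q).

Lemma expo_nil b : expo [::] b = 0. Proof. by rewrite /expo big_nil. Qed.
Lemma expo_cons a u b : expo (a :: u) b = bil a b + expo u b.
Proof. by rewrite /expo big_cons. Qed.

Lemma wstar_nil_l v : wstar [::] v = [:: (1, v)]. Proof. by []. Qed.
Lemma wstar_nil_r u : wstar u [::] = [:: (1, u)]. Proof. by case: u. Qed.
Lemma wstar_cons a u b v : wstar (a :: u) (b :: v) =
  [seq (c.1, a :: c.2) | c <- wstar u (b :: v)] ++
  [seq (c.1 * q ^ (expo (a :: u) b), b :: c.2) | c <- wstar (a :: u) v].
Proof. by []. Qed.

Lemma lin_map_cons a (p : Vrep F) f :
  lin [seq (c.1, a :: c.2) | c <- p] f = lin p (fun e => f (a :: e)).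
Proof. by rewrite /lin big_map. Qed.
Lemma lin_map_cons_k a k (p : Vrep F) f :
  lin [seq (c.1 * k, a :: c.2) | c <- p] f = k * lin p (fun e => f (a :: e)).
Proof.
rewrite /lin big_map mulr_sumr; apply: eq_bigr => c _ /=.
by rewrite mulrAC mulrC.
Qed.

Lemma lin_wstar_cons a u b v f :
  lin (wstar (a :: u) (b :: v)) f =
  lin (wstar u (b :: v)) (fun e => f (a :: e)) +
  q ^ (expo (a :: u) b) * lin (wstar (a :: u) v) (fun e => f (b :: e)).
Proof. by rewrite wstar_cons lin_cat lin_map_cons lin_map_cons_k. Qed.

Lemma lin_wstar_nil_l v f : lin (wstar [::] v) f = f v.
Proof. by rewrite wstar_nil_l lin_cons lin_nil mul1r addr0. Qed.
Lemma lin_wstar_nil_r u f : lin (wstar u [::]) f = f u.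
Proof. by rewrite wstar_nil_r lin_cons lin_nil mul1r addr0. Qed.

Lemma wstar_expo u v t c : c \in wstar u v -> expo c.2 t = expo u t + expo v t.
Proof.
elim: u v c => [|a u IHu] v c.
  by rewrite wstar_nil_l inE => /eqP -> /=; rewrite expo_nil add0r.
elim: v c => [|b v IHv] c.
  by rewrite wstar_nil_r inE => /eqP -> /=; rewrite expo_nil addr0.
rewrite wstar_cons mem_cat => /orP [] /mapP [d dm ->] /=.
  by rewrite !expo_cons (IHu _ _ dm) expo_cons addrA.
by rewrite expo_cons (IHv _ dm) !expo_cons; lia.
Qed.

Lemma WA n : forall u v t, (size u + size v + size t <= n)%N -> forall f,
  lin (wstar u v) (fun e => lin (wstar e t) f) =
  lin (wstar v t) (fun e => lin (wstar u e) f).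
Proof.
elim: n => [|n IH] u v t.
  case: u => [|]//; case: v => [|]//; case: t => [|]// _ f.
  by rewrite !lin_wstar_nil_l.
case: u => [|a u] sz f.
  rewrite lin_wstar_nil_l; apply: lin_ext => e; by rewrite lin_wstar_nil_l.
case: v sz => [|b v] sz.
  rewrite lin_wstar_nil_r lin_wstar_nil_l; by [].
case: t sz => [|c t] sz.
  rewrite lin_wstar_nil_r; apply: lin_ext => e; by rewrite lin_wstar_nil_r.
move: sz; rewrite /= !addSn !addnS => /ltnSE sz.
set Ec := expo (a :: u) c + expo (b :: v) c.
have L1 : lin (wstar u (b :: v)) (fun e => lin (wstar (a :: e) (c :: t)) f) =
   lin (wstar u (b :: v)) (fun e => lin (wstar e (c :: t)) (fun x => f (a :: x))) +
   q ^ Ec * lin (wstar u (b :: v)) (fun e => lin (wstar (a :: e) t) (fun x => f (c :: x))).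
  rewrite -lin_mull -lin_add; apply: lin_ext_in => d dm.
  rewrite lin_wstar_cons; congr (_ + _ * _).
  by rewrite expo_cons (wstar_expo _ dm) /Ec [expo (a :: u) c]expo_cons addrA.
have L2 : lin (wstar (a :: u) v) (fun e => lin (wstar (b :: e) (c :: t)) f) =
   lin (wstar (a :: u) v) (fun e => lin (wstar e (c :: t)) (fun x => f (b :: x))) +
   q ^ Ec * lin (wstar (a :: u) v) (fun e => lin (wstar (b :: e) t) (fun x => f (c :: x))).
  rewrite -lin_mull -lin_add; apply: lin_ext_in => d dm.
  rewrite lin_wstar_cons; congr (_ + _ * _).
  rewrite expo_cons (wstar_expo _ dm) /Ec [expo (b :: v) c]expo_cons; congr (_ ^ _); lia.
have L3 : lin (wstar u (b :: v)) (fun e => lin (wstar (a :: e) t) (fun x => f (c :: x))) +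
  q ^ expo (a :: u) b * lin (wstar (a :: u) v) (fun e => lin (wstar (b :: e) t) (fun x => f (c :: x)))
  = lin (wstar (b :: v) t) (fun e => lin (wstar (a :: u) e) (fun x => f (c :: x))).
  rewrite -(lin_wstar_cons a u b v (fun e => lin (wstar e t) (fun x => f (c :: x)))).
  apply: IH; rewrite /= !addSn addnS; exact: sz.
have HA : lin (wstar u (b :: v)) (fun e => lin (wstar e (c :: t)) (fun x => f (a :: x))) =
   lin (wstar v (c :: t)) (fun e => lin (wstar u (b :: e)) (fun x => f (a :: x))) +
   q ^ expo (b :: v) c * lin (wstar (b :: v) t) (fun e => lin (wstar u (c :: e)) (fun x => f (a :: x))).
  rewrite (IH u (b :: v) (c :: t)); last by move: sz; rewrite /= !addSn; lia.
  by rewrite lin_wstar_cons.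
have HB : lin (wstar (a :: u) v) (fun e => lin (wstar e (c :: t)) (fun x => f (b :: x))) =
   lin (wstar v (c :: t)) (fun e => lin (wstar (a :: u) e) (fun x => f (b :: x))).
  by rewrite (IH (a :: u) v (c :: t)) //; move: sz; rewrite /= !addSn; lia.
have R1 : lin (wstar v (c :: t)) (fun e => lin (wstar (a :: u) (b :: e)) f) =
   lin (wstar v (c :: t)) (fun e => lin (wstar u (b :: e)) (fun x => f (a :: x))) +
   q ^ expo (a :: u) b * lin (wstar v (c :: t)) (fun e => lin (wstar (a :: u) e) (fun x => f (b :: x))).
  by rewrite -lin_mull -lin_add; apply: lin_ext => d; rewrite lin_wstar_cons.
have R2 : lin (wstar (b :: v) t) (fun e => lin (wstar (a :: u) (c :: e)) f) =
   lin (wstar (b :: v) t) (fun e => lin (wstar u (c :: e)) (fun x => f (a :: x))) +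
   q ^ expo (a :: u) c * lin (wstar (b :: v) t) (fun e => lin (wstar (a :: u) e) (fun x => f (c :: x))).
  by rewrite -lin_mull -lin_add; apply: lin_ext => d; rewrite lin_wstar_cons.
rewrite [LHS]lin_wstar_cons [RHS]lin_wstar_cons L1 L2 R1 R2 HA HB -L3.
have -> : q ^ Ec = q ^ expo (a :: u) c * q ^ expo (b :: v) c by rewrite /Ec expfzDr.
ring.
Qed.

Lemma lin_Vstar p r f :
  lin (Vstar p r) f = lin p (fun u => lin r (fun v => lin (wstar u v) f)).
Proof.
rewrite /Vstar lin_flatten big_allpairs_dep /lin; apply: eq_bigr => c _.
rewrite mulr_sumr; apply: eq_bigr => d _.
rewrite big_map mulr_sumr mulr_sumr; apply: eq_bigr => e _ /=.
by rewrite !mulrA.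
Qed.

Lemma Vstar_assoc p r s : eqv (Vstar (Vstar p r) s) (Vstar p (Vstar r s)).
Proof.
move=> f; rewrite !lin_Vstar; apply: lin_ext => u; rewrite lin_Vstar.
apply: lin_ext => v; rewrite lin_swap.
apply: lin_ext => t; exact: (WA (leqnn _)).
Qed.

Lemma Vstar_eqv p p' r r' : eqv p p' -> eqv r r' -> eqv (Vstar p r) (Vstar p' r').
Proof.
move=> e1 e2 f; rewrite !lin_Vstar e1; apply: lin_ext => u; exact: e2.
Qed.

Lemma Vstar_one_l r : eqv (Vstar (Vone F) r) r.
Proof.
move=> f; rewrite lin_Vstar /Vone lin_cons lin_nil addr0 mul1r /=.
by apply: lin_ext => v; rewrite lin_wstar_nil_l.
Qed.

Lemma Vstar_one_r p : eqv (Vstar p (Vone F)) p.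
Proof.
move=> f; rewrite lin_Vstar; apply: lin_ext => u.
by rewrite /Vone lin_cons lin_nil addr0 mul1r lin_wstar_nil_r.
Qed.

Lemma lin_Vstar_single u r f :
  lin (Vstar [:: (1, u)] r) f = lin r (fun v => lin (wstar u v) f).
Proof. by rewrite lin_Vstar lin_cons lin_nil addr0 mul1r. Qed.

End Assoc.

Section Subalg.
Variables (F : fieldType) (q : F).
Hypothesis q0 : q != 0.
Variable g : nat -> Vrep F.

Notation Vstar := (Vstar q).
Notation Vprod := (Vprod q g).
Notation ins := (in_subalg q g).

Definition comb (L : seq (F * seq nat)) : Vrep F :=
  flatten [seq Vscale c.1 (Vprod c.2) | c <- L].

Lemma lin_comb L f : lin (comb L) f = \sum_(c <- L) c.1 * lin (Vprod c.2) f.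
Proof. by rewrite /comb lin_flatten big_map; apply: eq_bigr => c _; rewrite lin_scale. Qed.

Lemma insE p : ins p <-> exists L, eqv p (comb L).
Proof.
split=> [[L e]|[L e]]; exists L; first exact: ev_eqv.
exact: eqv_ev.
Qed.

Lemma ins_eqv p r : eqv p r -> ins r -> ins p.
Proof.
move=> e /insE [L eL]; apply/insE; exists L; exact: eqv_trans eL.
Qed.

Lemma ins_nil : ins [::].
Proof. by apply/insE; exists [::]. Qed.

Lemma ins_cat p r : ins p -> ins r -> ins (p ++ r).
Proof.
move=> /insE [L1 e1] /insE [L2 e2]; apply/insE; exists (L1 ++ L2) => f.
by rewrite lin_cat e1 e2 !lin_comb big_cat.
Qed.

Lemma ins_scale c p : ins p -> ins (Vscale c p).
Proof.
move=> /insE [L e]; apply/insE; exists [seq (c * d.1, d.2) | d <- L] => f.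
rewrite lin_scale e !lin_comb big_map mulr_sumr; apply: eq_bigr => d _ /=.
by rewrite mulrA.
Qed.

Lemma ins_flatten (s : seq (Vrep F)) : (forall p, p \in s -> ins p) -> ins (flatten s).
Proof.
elim: s => [|p s IH] H /=; first exact: ins_nil.
apply: ins_cat; first by apply: H; rewrite mem_head.
by apply: IH => r rs; apply: H; rewrite inE rs orbT.
Qed.

Lemma ins_one : ins (Vone F).
Proof.
apply/insE; exists [:: (1, [::])] => f.
by rewrite lin_comb big_cons big_nil addr0 mul1r.
Qed.

Lemma ins_lmul_gen i p : ins p -> ins (Vstar (g i.+1) p).
Proof.
move=> /insE [L e]; apply/insE; exists [seq (d.1, i :: d.2) | d <- L].
apply: (eqv_trans (Vstar_eqv q (eqv_refl _) e)) => f.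
rewrite lin_Vstar lin_comb big_map.
under lin_ext => u do rewrite lin_comb.
rewrite lin_sum; apply: eq_bigr => d _ /=.
by rewrite lin_mull lin_Vstar.
Qed.

Lemma ins_Vprod l : ins (Vprod l).
Proof.
elim: l => [|i l IH] /=; first exact: ins_one.
exact: ins_lmul_gen.
Qed.

Lemma ins_gen i : ins (g i.+1).
Proof.
apply: (@ins_eqv _ (Vstar (g i.+1) (Vone F))); first by apply: eqv_sym; apply: (Vstar_one_r q).
by apply: ins_lmul_gen; apply: ins_one.
Qed.

Lemma ins_mul p r : ins p -> ins r -> ins (Vstar p r).
Proof.
move=> /insE [L e] rin.
apply: (@ins_eqv _ (Vstar (comb L) r)); first exact: (Vstar_eqv q e (eqv_refl r)).
have H : forall l, ins (Vstar (Vprod l) r).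
  elim=> [|i l IH] /=.
    by apply: (ins_eqv (Vstar_one_l q _)).
  apply: (ins_eqv (Vstar_assoc q0 _ _ _)).
  exact: ins_lmul_gen.
apply: (@ins_eqv _ (flatten [seq Vscale c.1 (Vstar (Vprod c.2) r) | c <- L])).
  move=> f; rewrite lin_Vstar lin_comb lin_flatten big_map.
  by apply: eq_bigr => c _; rewrite lin_scale lin_Vstar.
apply: ins_flatten => p0 /mapP [c _ ->]; apply: ins_scale; exact: H.
Qed.

End Subalg.

Section Transfer.
Variables (F : fieldType) (q : F).
Hypothesis q0 : q != 0.

Lemma ins_lincomb (g : nat -> Vrep F) (I : eqType) (s : seq I) (c : I -> F) (X : I -> Vrep F) p :
  (forall i, i \in s -> in_subalg q g (X i)) ->
  (forall f, lin p f = \sum_(i <- s) c i * lin (X i) f) -> in_subalg q g p.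
Proof.
move=> H e.
apply: (@ins_eqv _ q g _ (flatten [seq Vscale (c i) (X i) | i <- s])).
  by move=> f; rewrite e lin_flatten big_map; apply: eq_bigr => i _; rewrite lin_scale.
apply: ins_flatten => r /mapP [i si ->]; apply: ins_scale; exact: H.
Qed.

Lemma ins_transfer (g g' : nat -> Vrep F) :
  (forall i, in_subalg q g (g' i.+1)) -> forall p, in_subalg q g' p -> in_subalg q g p.
Proof.
move=> H p /insE [L e].
apply: (ins_eqv e); apply: ins_flatten => r /mapP [c _ ->]; apply: ins_scale.
elim: c.2 => [|i l IH] /=; first exact: ins_one.
exact: ins_mul.
Qed.

End Transfer.

Section Paths.
Variables (F : fieldType) (q : F).
Hypothesis q0 : q != 0.

Notation wstar := (wstar q).
Notation Vstar := (Vstar q).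
Notation qint := (qint q).

Definition Gw (m : nat) : word := flatten (nseq m [:: true; false]).
Lemma GwS m : Gw m.+1 = true :: false :: Gw m. Proof. by []. Qed.
Lemma Gt_Gw m : Gt F m = [:: (1, Gw m)]. Proof. by []. Qed.

Lemma expo_Gw m a : expo (Gw m) a = 0.
Proof.
elim: m => [|m IH]; first exact: expo_nil.
by rewrite GwS !expo_cons IH /bil; clear IH; case: a => /=.
Qed.

Definition step (h : int) (a : bool) : F := if a then qint (h + 2) else qint h.
Definition hnext (h : int) (a : bool) : int := if a then h + 1 else h - 1.

Fixpoint pathc (h : int) (w : word) : F :=
  if w is b :: w' then step h b * pathc (hnext h b) w' else (h == 0)%:R.

Definition Aw (L : nat) (h : int) : Vrep F := [seq (pathc h w, w) | w <- allwords L].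

Definition dl (w : word) : word -> F := fun u => (u == w)%:R.

Lemma lin_Aw L h f : lin (Aw L h) f = \sum_(w <- allwords L) pathc h w * f w.
Proof. by rewrite /lin /Aw big_map. Qed.

Lemma lin_Aw0 h f : lin (Aw 0 h) f = (h == 0)%:R * f [::].
Proof. by rewrite lin_Aw /= big_cons big_nil addr0. Qed.

Lemma allwordsS L : allwords L.+1 = [seq b :: w | b <- [:: true; false], w <- allwords L].
Proof. by []. Qed.

Lemma lin_AwS L h f : lin (Aw L.+1 h) f =
  \sum_(w <- allwords L) pathc h (true :: w) * f (true :: w) +
  \sum_(w <- allwords L) pathc h (false :: w) * f (false :: w).
Proof.
rewrite lin_Aw allwordsS big_allpairs_dep big_cons big_cons big_nil.
by rewrite Monoid.mulm1.
Qed.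

Lemma lin_Aw_head L h a (k : F) (X : word -> F) :
  lin (Aw L h) (fun v => if v is b :: v' then (b == a)%:R * k * X v' else 0) =
  if L is L'.+1 then k * (step h a * lin (Aw L' (hnext h a)) X) else 0.
Proof.
case: L => [|L]; first by rewrite lin_Aw0 mulr0.
rewrite lin_AwS !lin_Aw mulr_sumr mulr_sumr.
case: a => /=.
  rewrite [X in _ + X]big1 ?addr0 => [|w _]; last by rewrite !mul0r mulr0.
  by apply: eq_bigr => w _; ring.
rewrite [X in X + _]big1 ?add0r => [|w _]; last by rewrite !mul0r mulr0.
by apply: eq_bigr => w _; ring.
Qed.

Lemma lin_wstar_dl u v a w :
  lin (wstar u v) (dl (a :: w)) =
  (if u is b :: u' then (b == a)%:R * lin (wstar u' v) (dl w) else 0) +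
  (if v is b :: v' then (b == a)%:R * q ^ (expo u a) * lin (wstar u v') (dl w) else 0).
Proof.
case: u => [|b u].
  rewrite lin_wstar_nil_l add0r; case: v => [|c v]; first by [].
  rewrite expo_nil expr0z mulr1 lin_wstar_nil_l /dl eqseq_cons.
  by case: (c == a); case: (v == w); rewrite ?mul1r ?mul0r.
case: v => [|c v].
  rewrite lin_wstar_nil_r lin_wstar_nil_r addr0 /dl eqseq_cons.
  by case: (b == a); case: (u == w); rewrite ?mul1r ?mul0r.
rewrite lin_wstar_cons; congr (_ + _).
  rewrite /dl; case: (b =P a) => [->|nba]; rewrite ?mul1r ?mul0r.
    by apply: lin_ext => e; rewrite eqseq_cons eqxx.
  by rewrite -(lin_zero (wstar u (c :: v))); apply: lin_ext => e; rewrite eqseq_cons; case: eqP.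
rewrite /dl; case: (c =P a) => [->|nca].
  rewrite mul1r; congr (_ * _); by apply: lin_ext => e; rewrite eqseq_cons eqxx.
rewrite !mul0r -[RHS](mulr0 (q ^ expo (b :: u) c)); congr (_ * _).
by rewrite -(lin_zero (wstar (b :: u) v)); apply: lin_ext => e; rewrite eqseq_cons; case: eqP.
Qed.

Lemma lin_wstar_dl_nil u v :
  lin (wstar u v) (dl [::]) = ((u == [::]) && (v == [::]))%:R.
Proof.
case: u => [|b u]; first by rewrite lin_wstar_nil_l.
case: v => [|c v]; first by rewrite lin_wstar_nil_r.
by rewrite lin_wstar_cons !lin_zero mulr0 addr0.
Qed.

Lemma lin_Aw_wstar u L h a w :
  lin (Aw L h) (fun v => lin (wstar u v) (dl (a :: w))) =
  (if u is b :: u' then (b == a)%:R * lin (Aw L h) (fun v => lin (wstar u' v) (dl w)) else 0) +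
  (if L is L'.+1 then q ^ (expo u a) * (step h a * lin (Aw L' (hnext h a)) (fun v => lin (wstar u v) (dl w))) else 0).
Proof.
under lin_ext => v do rewrite lin_wstar_dl.
rewrite lin_add; congr (_ + _).
  by case: u => [|b u]; rewrite ?lin_zero // lin_mull.
by rewrite -lin_Aw_head; apply: lin_ext => -[|b v].
Qed.

Definition pc m h L w := ev (Vstar (Gt F m) (Aw L h)) w.
Definition qc m h L w := ev (Vstar [:: (1, false :: Gw m)] (Aw L h)) w.

Lemma pcE m h L w : pc m h L w = lin (Aw L h) (fun v => lin (wstar (Gw m) v) (dl w)).
Proof. by rewrite /pc ev_lin Gt_Gw lin_Vstar_single. Qed.
Lemma qcE m h L w : qc m h L w = lin (Aw L h) (fun v => lin (wstar (false :: Gw m) v) (dl w)).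
Proof. by rewrite /qc ev_lin lin_Vstar_single. Qed.

Lemma pc_t m h L w : pc m h L (true :: w) =
  (if m is m'.+1 then qc m' h L w else 0) +
  (if L is L'.+1 then qint (h + 2) * pc m (h + 1) L' w else 0).
Proof.
rewrite pcE lin_Aw_wstar; congr (_ + _).
  by case: m => [|m] //; rewrite GwS mul1r qcE.
by case: L => [|L] //; rewrite expo_Gw expr0z mul1r pcE.
Qed.

Lemma pc_f m h L w : pc m h L (false :: w) =
  if L is L'.+1 then qint h * pc m (h - 1) L' w else 0.
Proof.
rewrite pcE lin_Aw_wstar.
case: m => [|m]; rewrite ?GwS ?mul0r add0r //.
  by case: L => [|L] //; rewrite expo_Gw expr0z mul1r pcE.
by case: L => [|L] //; rewrite -GwS expo_Gw expr0z mul1r pcE.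
Qed.

Lemma qc_t m h L w : qc m h L (true :: w) =
  if L is L'.+1 then q ^ (-2) * (qint (h + 2) * qc m (h + 1) L' w) else 0.
Proof.
rewrite qcE lin_Aw_wstar mul0r add0r.
case: L => [|L] //; rewrite expo_cons expo_Gw addr0 qcE //.
Qed.

Lemma qc_f m h L w : qc m h L (false :: w) =
  pc m h L w + (if L is L'.+1 then q ^ 2 * (qint h * qc m (h - 1) L' w) else 0).
Proof.
rewrite qcE lin_Aw_wstar mul1r -pcE.
case: L => [|L] //; rewrite expo_cons expo_Gw addr0 qcE //.
Qed.

Lemma pc_nil m h L : pc m h L [::] = ((m == 0)%N && (L == 0)%N && (h == 0))%:R.
Proof.
rewrite pcE; under lin_ext => v do rewrite lin_wstar_dl_nil.
case: m => [|m]; last first.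
  rewrite (@lin_ext _ _ _ (fun=> 0)) ?lin_zero // => v; by rewrite GwS.
case: L => [|L].
  by rewrite lin_Aw0 /= mulr1.
rewrite lin_AwS !big1 ?addr0 // => w _; by rewrite mulr0.
Qed.

Lemma qc_nil m h L : qc m h L [::] = 0.
Proof.
by rewrite qcE; under lin_ext => v do rewrite lin_wstar_dl_nil; rewrite lin_zero.
Qed.

End Paths.

Section Fam.
Variables (F : fieldType) (q : F).
Hypothesis q0 : q != 0.

Notation qint := (qint q).
Notation pc := (pc q).
Notation qc := (qc q).
Notation pathc := (pathc q).
Notation Aw := (Aw q).

Lemma allwords_size L w : w \in allwords L -> size w = L.
Proof.
elim: L w => [|L IH] w; first by rewrite inE => /eqP ->.
rewrite allwordsS => /allpairsPdep [b [v [_ vin ->]]] /=.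
by rewrite (IH _ vin).
Qed.

Lemma fpath_small h w : (size w)%:Z < h -> pathc h w = 0.
Proof.
elim: w h => [|b w IH] h /= lt.
  by move: lt; case: eqP => // ->.
rewrite IH ?mulr0 //; rewrite /hnext; case: b; move: lt => /=; lia.
Qed.

Lemma lin_Aw_small L h f : L%:Z < h -> lin (Aw L h) f = 0.
Proof.
move=> lt; rewrite lin_Aw big1_seq // => w /andP [_ win].
by rewrite fpath_small ?mul0r // (allwords_size win).
Qed.

Lemma pc_small m h L w : L%:Z < h -> pc m h L w = 0.
Proof. by move=> lt; rewrite pcE lin_Aw_small. Qed.
Lemma qc_small m h L w : L%:Z < h -> qc m h L w = 0.
Proof. by move=> lt; rewrite qcE lin_Aw_small. Qed.

Definition SS (h N : nat) (a b : F) (w : word) : F :=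
  \sum_(j < N.+1) a ^+ (N - j) * b ^+ j * pc (N - j) h (h + j.*2) w.
Definition TT (h N : nat) (a b : F) (w : word) : F :=
  \sum_(j < N.+1) a ^+ (N - j) * b ^+ j * qc (N - j) h (h + j.*2) w.

Lemma qint0 : qint 0 = 0.
Proof. by rewrite /Defs.qint oppr0 subrr mul0r. Qed.
Lemma qint0n : qint (Posz 0) = 0.
Proof. exact: qint0. Qed.

Lemma SS_nil h N a b : SS h N a b [::] = ((h == 0)%N && (N == 0)%N)%:R.
Proof.
rewrite /SS; case: N => [|N].
  rewrite big_ord_recl big_ord0 addr0 /= pc_nil /= expr0 !mul1r.
  by case: h.
rewrite andbF big1 // => i _; rewrite pc_nil.
case: i => [[|i]] //= _; first by rewrite subn0 !mulr0.
by rewrite addnS /= andbF !mulr0.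
Qed.

Lemma TT_nil h N a b : TT h N a b [::] = 0.
Proof. by rewrite /TT big1 // => i _; rewrite qc_nil mulr0. Qed.

Lemma SS_f h N a b w : SS h N a b (false :: w) = qint h * SS h.-1 N a b w.
Proof.
rewrite /SS mulr_sumr; apply: eq_bigr => i _; rewrite pc_f.
case: h => [|h].
  case: (0 + i.*2)%N => [|L]; first by rewrite qint0n !mulr0 mul0r.
  by rewrite qint0n !mul0r mulr0.
rewrite addSn /=; have -> : (h.+1%:Z - 1) = h%:Z by lia.
ring.
Qed.

Lemma TT_f h N a b w : TT h N a b (false :: w) =
  SS h N a b w + q ^ 2 * qint h * TT h.-1 N a b w.
Proof.
rewrite /TT /SS mulr_sumr -big_split; apply: eq_bigr => i _ /=; rewrite qc_f.
case: h => [|h].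
  case: (0 + i.*2)%N => [|L]; first by rewrite qint0n; ring.
  by rewrite qint0n; ring.
rewrite addSn /=; have -> : (h.+1%:Z - 1) = h%:Z by lia.
ring.
Qed.

Lemma SS_t0 h a b w : SS h 0 a b (true :: w) = 0.
Proof.
rewrite /SS big_ord_recl big_ord0 addr0 /= pc_t.
case: h => [|h] /=; first by rewrite addr0 mulr0.
rewrite addn0 pc_small; [by rewrite mulr0 add0r mulr0 | lia].
Qed.

Lemma TT_t0 h a b w : TT h 0 a b (true :: w) = 0.
Proof.
rewrite /TT big_ord_recl big_ord0 addr0 /= qc_t.
case: h => [|h] //=; first by rewrite !mulr0.
by rewrite addn0 qc_small ?mulr0 ?addr0 //; lia.
Qed.

Lemma SS_t h N a b w : SS h N.+1 a b (true :: w) =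
  a * TT h N a b w + qint (h%:Z + 2) * b * SS h.+1 N a b w.
Proof.
rewrite /SS; under eq_bigr => i _ do rewrite pc_t mulrDr.
rewrite big_split /=; congr (_ + _).
  rewrite big_ord_recr /= subnn mulr0 addr0 /TT mulr_sumr; apply: eq_bigr => i _ /=.
  rewrite subSn; last by rewrite -ltnS.
  by rewrite exprS; ring.
rewrite big_ord_recl /= addn0.
have -> : (if h is L'.+1 then qint (h%:Z + 2) * pc N.+1 (h%:Z + 1) L' w else 0) = 0.
  case: h => [|h] //; rewrite pc_small; [exact: mulr0 | lia].
rewrite mulr0 add0r mulr_sumr; apply: eq_bigr => i _.
rewrite /bump /= add1n subSS doubleS addnS.
have -> : (h%:Z + 1) = h.+1%:Z by lia.
rewrite addSn exprS !addnS; ring.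
Qed.

Lemma TT_t h N a b w : TT h N.+1 a b (true :: w) =
  q ^ (-2) * qint (h%:Z + 2) * b * TT h.+1 N a b w.
Proof.
rewrite /TT; under eq_bigr => i _ do rewrite qc_t.
rewrite big_ord_recl /= addn0.
have -> : (if h is L'.+1 then q ^ (-2) * (qint (h%:Z + 2) * qc N.+1 (h%:Z + 1) L' w) else 0) = 0.
  by case: h => [|h] //; rewrite qc_small ?mulr0 //; lia.
rewrite mulr0 add0r mulr_sumr; apply: eq_bigr => i _.
rewrite /bump /= add1n subSS doubleS addnS.
have -> : (h%:Z + 1) = h.+1%:Z by lia.
rewrite addSn exprS !addnS; move: (q ^ (-2)) => z; ring.
Qed.

End Fam.

Section Ident.
Variables (F : fieldType) (q : F).
Hypothesis q0 : q != 0.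
Hypothesis qq : q - q^-1 != 0.

Notation qint := (qint q).
Notation SS := (SS q).
Notation TT := (TT q).

Lemma qa2 (n : nat) : qint (n%:Z + 2) = qint (n.+2)%:Z.
Proof. congr qint; lia. Qed.
Lemma qa1 (n : nat) : qint (n%:Z + 1) = qint (n.+1)%:Z.
Proof. congr qint; lia. Qed.
Lemma qint_nat (n : nat) : qint n%:Z = (q ^+ n - (q ^+ n)^-1) / (q - q^-1).
Proof. by rewrite /Defs.qint -exprnN. Qed.
Lemma qm2 : q ^ (-2) = (q ^+ 2)^-1. Proof. by []. Qed.
Lemma qp2 : q ^ 2 = (q ^+ 2). Proof. by []. Qed.

Let a1 := q ^+ 2.
Let b1 := - q.
Let a2 := (q ^+ 2)^-1.
Let b2 := - q^-1.

Definition Yx N w := SS 0 N a1 b1 w - SS 0 N a2 b2 w.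
Definition Ix k N w := TT k N a1 b1 w - q ^+ k * SS k.+1 N a1 b1 w.
Definition Zx k N w := q ^+ (k.*2.+2) * SS k.+1 N a1 b1 w
   - q ^+ k.+1 * qint (k%:Z + 2) * SS k.+1 N a2 b2 w + qint (k%:Z + 1) * TT k N a2 b2 w.

Lemma qk0 k : q ^+ k != 0. Proof. exact: expf_neq0. Qed.

Lemma qq2 : q * q - 1 != 0.
Proof.
apply: contraNneq qq => e; apply/eqP.
have : q * (q - q^-1) = 0 by rewrite mulrBr mulfV // e.
by move/eqP; rewrite mulf_eq0 (negbTE q0) /= => /eqP.
Qed.

Ltac qsimp := rewrite ?qa2 ?qa1 ?qm2 ?qp2 ?qint0n !qint_nat -?addnn ?addSn ?addnS !exprS ?exprD ?expr0.
Ltac side := rewrite ?q0 ?qq2 ?qk0 ?expf_neq0 ?mulf_neq0 ?invr_neq0 //=.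

Lemma fam w : forall N k, Yx N w = 0 /\ Ix k N w = 0 /\ Zx k N w = 0.
Proof.
elim: w => [|[] w IH] N k.
- by rewrite /Yx /Ix /Zx !SS_nil !TT_nil /=; split; [|split]; ring.
- case: N => [|N].
    rewrite /Yx /Ix /Zx !(SS_t0 q0) !(TT_t0 q0); split; [|split]; ring.
  have [_ [I0 Z0]] := IH N 0%N.
  have [_ [I1 Z1]] := IH N k.+1.
  split; [|split].
  + rewrite /Yx !(SS_t q0).
    have -> : a1 * TT 0 N a1 b1 w + qint (0%:Z + 2) * b1 * SS 1 N a1 b1 w -
      (a2 * TT 0 N a2 b2 w + qint (0%:Z + 2) * b2 * SS 1 N a2 b2 w) =
      q ^+ 2 * Ix 0 N w - (q ^+ 2)^-1 * Zx 0 N w.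
      rewrite /Ix /Zx /a1 /a2 /b1 /b2; qsimp.
      by field; side.
    by rewrite I0 Z0 !mulr0 subrr.
  + rewrite /Ix (TT_t q0) (SS_t q0).
    have -> : q ^ (-2) * qint (k%:Z + 2) * b1 * TT k.+1 N a1 b1 w -
      q ^+ k * (a1 * TT k.+1 N a1 b1 w + qint (k.+1%:Z + 2) * b1 * SS k.+2 N a1 b1 w) =
      (- q^-1 * qint (k%:Z + 2) - q ^+ k.+2) * Ix k.+1 N w.
      rewrite /Ix /a1 /b1; qsimp.
      by field; side.
    by rewrite I1 mulr0.
  + rewrite /Zx (TT_t q0) !(SS_t q0).
    have -> : q ^+ k.*2.+2 * (a1 * TT k.+1 N a1 b1 w + qint (k.+1%:Z + 2) * b1 * SS k.+2 N a1 b1 w) -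
      q ^+ k.+1 * qint (k%:Z + 2) * (a2 * TT k.+1 N a2 b2 w + qint (k.+1%:Z + 2) * b2 * SS k.+2 N a2 b2 w) +
      qint (k%:Z + 1) * (q ^ (-2) * qint (k%:Z + 2) * b2 * TT k.+1 N a2 b2 w) =
      - (q ^+ 2)^-1 * qint (k%:Z + 2) * Zx k.+1 N w + q ^+ (k.*2.+4) * Ix k.+1 N w.
      rewrite /Ix /Zx /a1 /a2 /b1 /b2; qsimp.
      by field; side.
    by rewrite I1 Z1 !mulr0 addr0.
- split; [|split].
  + by rewrite /Yx !(SS_f q0) qint0n !mul0r subrr.
  + rewrite /Ix (TT_f q0) (SS_f q0); case: k => [|k].
      rewrite /= qint0n; qsimp; by field; side.
    have [_ [Ik _]] := IH N k.
    have -> : SS k.+1 N a1 b1 w + q ^ 2 * qint k.+1 * TT k.+1.-1 N a1 b1 w -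
      q ^+ k.+1 * (qint k.+2 * SS k.+2.-1 N a1 b1 w) = q ^+ 2 * qint k.+1 * Ix k N w.
      rewrite /Ix /=; qsimp; by field; side.
    by rewrite Ik mulr0.
  + rewrite /Zx (TT_f q0) !(SS_f q0); case: k => [|k].
      have [Y0 _] := IH N 0%N.
      have -> : q ^+ (0.*2.+2) * (qint 1 * SS 0 N a1 b1 w) -
        q ^+ 1 * qint (0%:Z + 2) * (qint 1 * SS 0 N a2 b2 w) +
        qint (0%:Z + 1) * (SS 0 N a2 b2 w + q ^ 2 * qint 0 * TT 0.-1 N a2 b2 w) =
        q ^+ 2 * Yx N w.
        rewrite /Yx /=; qsimp; by field; side.
      by rewrite Y0 mulr0.
    have [_ [_ Zk]] := IH N k.
    have -> : q ^+ (k.+1.*2.+2) * (qint k.+2 * SS k.+2.-1 N a1 b1 w) -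
      q ^+ k.+2 * qint (k.+1%:Z + 2) * (qint k.+2 * SS k.+2.-1 N a2 b2 w) +
      qint (k.+1%:Z + 1) * (SS k.+1 N a2 b2 w + q ^ 2 * qint k.+1 * TT k.+1.-1 N a2 b2 w) =
      q ^+ 2 * qint k.+2 * Zx k N w.
      rewrite /Zx /=; qsimp; by field; side.
    by rewrite Zk mulr0.
Qed.

End Ident.

Section Cat.
Variables (F : fieldType) (q : F).
Hypothesis qq : q - q^-1 != 0.

Notation qint := (qint q).
Notation pathc := (pathc q).

Lemma psum0 w : psum w 0 = 0. Proof. by rewrite /psum big_ord0. Qed.
Lemma psum_cons b w i : psum (b :: w) i.+1 = bar b + psum w i.
Proof. by rewrite /psum big_ord_recl. Qed.

Lemma qint1 : qint 1 = 1.
Proof. by rewrite /Defs.qint expr1z -exprnN expr1 mulfV. Qed.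

Definition catk (k : nat) (w : word) :=
  all (fun i => 0 <= k%:Z + psum w i) (iota 1 (size w).-1) && (k%:Z + psum w (size w) == 0).
Definition coefk (k : nat) (w : word) : F :=
  \prod_(i < size w) qint (1 + (k%:Z + psum w i.+1)).

Lemma pathc_cat w k : pathc k%:Z w = if catk k w then coefk k w else 0.
Proof.
elim: w k => [|b w IH] k.
  by rewrite /catk /coefk /= psum0 addr0 big_ord0; case: k.
rewrite /= /catk /coefk /= big_ord_recl psum_cons.
have allS : forall (P : nat -> bool),
   all P (iota 1 (size w)) = if size w is n.+1 then P 1%N && all (fun i => P i.+1) (iota 1 n) else true.
  move=> P; case: (size w) => [|n] //=.
  by rewrite (_ : 2 = 1 + 1)%N // iotaDl all_map.
case: b; rewrite /step /hnext.
- have -> : k%:Z + 1 = k.+1%:Z by lia.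
  rewrite IH /catk /coefk allS psum_cons.
  have -> : (k%:Z + (bar true + psum w (size w)) == 0) = (k.+1%:Z + psum w (size w) == 0).
    by congr (_ == _); rewrite /bar; lia.
  have -> : (1 + (k%:Z + (bar true + psum w 0))) = k%:Z + 2 by rewrite psum0 /bar; lia.
  have -> : \prod_(i < size w) qint (1 + (k%:Z + psum (true :: w) (bump 0 i).+1)) =
            \prod_(i < size w) qint (1 + (k.+1%:Z + psum w i.+1)).
    by apply: eq_bigr => i _; rewrite -[bump 0 i]/(i.+1) psum_cons /bar; congr qint; lia.
  case: (size w) => [|n] /=; first by case: ifP; rewrite ?mulr0.
  rewrite (_ : (0 <= k%:Z + (bar true + psum w 0)) = true); last by rewrite psum0 /bar; lia.
  rewrite (@eq_all _ _ (fun i => 0 <= k.+1%:Z + psum w i)) => [|i]; last first.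
    by rewrite psum_cons /bar; congr (_ <= _); lia.
  by case: ifP; rewrite ?mulr0.
- case: k IH => [|k] IH.
    rewrite qint0n mul0r.
    case: (size w) => [|n] /=; first by rewrite psum0.
    by rewrite psum_cons psum0 /bar.
  have -> : k.+1%:Z - 1 = k%:Z by lia.
  rewrite IH /catk /coefk allS psum_cons.
  have -> : (k.+1%:Z + (bar false + psum w (size w)) == 0) = (k%:Z + psum w (size w) == 0).
    by congr (_ == _); rewrite /bar; lia.
  have -> : (1 + (k.+1%:Z + (bar false + psum w 0))) = k.+1%:Z by rewrite psum0 /bar; lia.
  have -> : \prod_(i < size w) qint (1 + (k.+1%:Z + psum (false :: w) (bump 0 i).+1)) =
            \prod_(i < size w) qint (1 + (k%:Z + psum w i.+1)).
    by apply: eq_bigr => i _; rewrite -[bump 0 i]/(i.+1) psum_cons /bar; congr qint; lia.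
  case: (size w) => [|n] /=; first by case: ifP; rewrite ?mulr0.
  rewrite (_ : (0 <= k.+1%:Z + (bar false + psum w 0)) = true); last by rewrite psum0 /bar; lia.
  rewrite (@eq_all _ _ (fun i => 0 <= k%:Z + psum w i)) => [|i]; last first.
    by rewrite psum_cons /bar; congr (_ <= _); lia.
  by case: ifP; rewrite ?mulr0.
Qed.

Lemma pathc_catalan w : pathc 0 w = if catalan w then Ccoef q w else 0.
Proof.
have -> : catalan w = catk 0 w.
  rewrite /catalan /catk; congr (_ && _); last by rewrite add0r.
  by apply: eq_all => i; rewrite add0r.
rewrite (pathc_cat w 0); case: ifP => // _.
rewrite /Ccoef big_ord_recl psum0 addr0 qint1 mul1r /coefk.
by apply: eq_bigr => i _; rewrite add0r.
Qed.

Lemma Cn_Aw j : eqv (Cn q j) (Aw q (j.*2) 0).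
Proof.
move=> f; rewrite lin_Aw /lin /Cn big_map big_filter big_mkcond /=.
rewrite -mul2n; apply: eq_bigr => w _; rewrite pathc_catalan.
by case: ifP; rewrite ?mul0r.
Qed.

End Cat.

Section Main.
Variables (F : fieldType) (q : F).
Hypothesis q0 : q != 0.
Hypothesis qn : forall n : nat, (0 < n)%N -> q ^+ n != 1.

Lemma qq : q - q^-1 != 0.
Proof.
apply/eqP => e; have := qn (isT : (0 < 2)%N); apply/negP; rewrite negbK.
have : q * (q - q^-1) = 0 by rewrite e mulr0.
by rewrite mulrBr mulfV // expr2 => /eqP; rewrite subr_eq0.
Qed.

Lemma ins_lincomb_ev (g : nat -> Vrep F) (s : seq nat) (c : nat -> F) (X : nat -> Vrep F) p :
  (forall i, i \in s -> in_subalg q g (X i)) ->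
  (forall w, ev p w = \sum_(i <- s) c i * ev (X i) w) -> in_subalg q g p.
Proof.
move=> H e.
apply: (@ins_eqv _ q g _ (flatten [seq Vscale (c i) (X i) | i <- s])).
  apply: ev_eqv => w; rewrite e ev_lin lin_flatten big_map.
  by apply: eq_bigr => i _; rewrite lin_scale ev_lin.
apply: ins_flatten => r /mapP [i si ->]; apply: ins_scale; exact: H.
Qed.

Lemma Cn0 : eqv (Cn q 0) (Vone F).
Proof.
apply: (eqv_trans (Cn_Aw qq 0)) => f.
by rewrite lin_Aw0.
Qed.

Definition cf (N j : nat) : F :=
  (q ^+ 2) ^+ (N - j) * (- q) ^+ j - ((q ^+ 2)^-1) ^+ (N - j) * (- q^-1) ^+ j.

Lemma ident N w :
  \sum_(j < N.+1) cf N j * ev (Vstar q (Gt F (N - j)) (Cn q j)) w = 0.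
Proof.
have [Y _] := fam q0 qq w N 0.
rewrite -[RHS]Y /Yx /SS -sumrB; apply: eq_bigr => j _.
have -> : ev (Vstar q (Gt F (N - j)) (Cn q j)) w = pc q (N - j) 0 (0 + j.*2) w.
  rewrite /pc; apply: eqv_ev; apply: Vstar_eqv => //; exact: Cn_Aw qq j.
by rewrite /cf mulrBl.
Qed.

Lemma cfNN N : (0 < N)%N -> cf N N != 0.
Proof.
move=> N0; rewrite /cf subnn !expr0 !mul1r subr_eq0.
apply/negP => /eqP e.
have h1 : (- q) ^+ N * (- q^-1) ^+ N = 1 by rewrite -exprMn mulrNN mulfV // expr1n.
rewrite -e -exprMn mulrNN -expr2 -exprM in h1.
have pos : (0 < 2 * N)%N by rewrite muln_gt0.
by move: (qn pos); rewrite h1 eqxx.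
Qed.

Lemma cfN0 N : (0 < N)%N -> cf N 0 != 0.
Proof.
move=> N0; rewrite /cf subn0 !expr0 !mulr1 subr_eq0.
apply/negP => /eqP e.
have h1 : (q ^+ 2) ^+ N * ((q ^+ 2)^-1) ^+ N = 1.
  by rewrite -exprMn mulfV ?expr1n // expf_neq0.
rewrite -e -!exprM -exprD in h1.
have pos : (0 < 2 * N + 2 * N)%N by rewrite addn_gt0 muln_gt0 N0.
by move: (qn pos); rewrite h1 eqxx.
Qed.

Lemma solve_lin (c x S : F) : c != 0 -> S + c * x = 0 -> x = - c^-1 * S.
Proof.
move=> c0 e; apply: (mulfI c0).
have -> : c * x = - S by rewrite -[c * x](addKr S) e addr0.
by rewrite mulrA mulrN mulfV // mulN1r.
Qed.

Lemma CinG N : in_subalg q (Gt F) (Cn q N).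
Proof.
elim/ltn_ind: N => N IH.
case: N IH => [|N] IH; first exact: (ins_eqv Cn0 (ins_one q (Gt F))).
apply: (@ins_lincomb_ev _ (iota 0 N.+1) (fun j => - (cf N.+1 N.+1)^-1 * cf N.+1 j)
          (fun j => Vstar q (Gt F (N.+1 - j)) (Cn q j))).
  move=> j; rewrite mem_iota add0n => /andP [_ jN].
  apply: (ins_mul q0).
    rewrite subSn //; exact: ins_gen.
  exact: IH.
move=> w; have I := ident N.+1 w.
rewrite big_ord_recr /= subnn in I.
have E0 : ev (Vstar q (Gt F 0) (Cn q N.+1)) w = ev (Cn q N.+1) w.
  by apply: eqv_ev; exact: Vstar_one_l.
rewrite E0 in I; rewrite (solve_lin (cfNN (ltn0Sn N)) I) mulr_sumr.
rewrite (_ : iota 0 N.+1 = index_iota 0 N.+1) ?big_mkord; last by rewrite /index_iota subn0.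
apply: eq_bigr => j _; by rewrite mulrA.
Qed.

Lemma GinC N : in_subalg q (Cn q) (Gt F N).
Proof.
elim/ltn_ind: N => N IH.
case: N IH => [|N] IH; first exact: (ins_one q (Cn q)).
apply: (@ins_lincomb_ev _ (iota 0 N.+1) (fun j => - (cf N.+1 0)^-1 * cf N.+1 j.+1)
          (fun j => Vstar q (Gt F (N.+1 - j.+1)) (Cn q j.+1))).
  move=> j; rewrite mem_iota add0n => /andP [_ jN].
  apply: (ins_mul q0); last exact: ins_gen.
  by apply: IH; rewrite subSS ltnS leq_subr.
move=> w; have I := ident N.+1 w.
rewrite big_ord_recl /= subn0 in I.
have E0 : ev (Vstar q (Gt F N.+1) (Cn q 0)) w = ev (Gt F N.+1) w.
  by apply: eqv_ev; apply: (eqv_trans (Vstar_eqv q (eqv_refl _) Cn0)); exact: Vstar_one_r.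
rewrite E0 addrC in I; rewrite (solve_lin (cfN0 (ltn0Sn N)) I) mulr_sumr.
rewrite (_ : iota 0 N.+1 = index_iota 0 N.+1) ?big_mkord; last by rewrite /index_iota subn0.
apply: eq_bigr => j _; by rewrite mulrA.
Qed.

Variable D : nat -> Vrep F.
Hypothesis hD0 : ev (D 0%N) =1 ev (Vone F).
Hypothesis hD : forall n : nat, (0 < n)%N ->
     ev (flatten [seq Vstar q (D i) (Gt F (n - i)) | i <- iota 0 n.+1]) =1 (fun _ => 0).

Lemma hDsum n w : (0 < n)%N ->
  \sum_(i <- iota 0 n.+1) ev (Vstar q (D i) (Gt F (n - i))) w = 0.
Proof.
move=> n0; rewrite -[RHS](hD n0 w) ev_lin lin_flatten big_map.
by apply: eq_bigr => i _; rewrite ev_lin.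
Qed.

Lemma DinG n : in_subalg q (Gt F) (D n).
Proof.
elim/ltn_ind: n => n IH.
case: n IH => [|n] IH; first exact: (ins_eqv (ev_eqv hD0) (ins_one q (Gt F))).
apply: (@ins_lincomb_ev _ (iota 0 n.+1) (fun _ => -1)
          (fun i => Vstar q (D i) (Gt F (n.+1 - i)))).
  move=> i; rewrite mem_iota add0n => /andP [_ iN].
  apply: (ins_mul q0); first exact: IH.
  rewrite subSn //; exact: ins_gen.
move=> w; have I := hDsum w (ltn0Sn n).
rewrite -addn1 iotaD big_cat big_seq1 /= subnn in I.
have E0 : ev (Vstar q (D n.+1) (Gt F 0)) w = ev (D n.+1) w.
  by apply: eqv_ev; exact: Vstar_one_r.
rewrite add0n E0 -[ev (D n.+1) w]mul1r in I.
rewrite (solve_lin (oner_neq0 F) I) invr1 mulr_sumr.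
by [].
Qed.

Lemma GinD n : in_subalg q D (Gt F n).
Proof.
elim/ltn_ind: n => n IH.
case: n IH => [|n] IH; first exact: (ins_one q D).
apply: (@ins_lincomb_ev _ (iota 1 n.+1) (fun _ => -1)
          (fun i => Vstar q (D i) (Gt F (n.+1 - i)))).
  move=> i; rewrite mem_iota => /andP [i1 iN].
  apply: (ins_mul q0).
    by case: i i1 iN => [|i] // _ _; exact: ins_gen.
  by apply: IH; rewrite ltn_subrL /=; case: i i1 iN.
move=> w; have I := hDsum w (ltn0Sn n).
rewrite [iota 0 _]/= big_cons subn0 in I.
have E0 : ev (Vstar q (D 0) (Gt F n.+1)) w = ev (Gt F n.+1) w.
  apply: eqv_ev; apply: (eqv_trans (Vstar_eqv q (ev_eqv hD0) (eqv_refl _))).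
  exact: Vstar_one_l.
rewrite E0 addrC -[ev (Gt F n.+1) w]mul1r in I.
rewrite (solve_lin (oner_neq0 F) I) invr1 mulr_sumr.
by [].
Qed.

End Main.

Import GRing.Theory Num.Theory.
Local Open Scope ring_scope.
Unset Implicit Arguments.

Theorem corollary11p12 (F : fieldType) (q : F) (D : nat -> Vrep F) :
  q != 0 ->
  (forall n : nat, (0 < n)%N -> q ^+ n != 1) ->
  ev (D 0%N) =1 ev (Vone F) ->
  (forall n : nat, (0 < n)%N ->
     ev (flatten [seq Vstar q (D i) (Gt F (n - i)) | i <- iota 0 n.+1])
     =1 (fun _ => 0)) ->
  (forall p : Vrep F, in_subalg q (Cn q) p <-> in_subalg q D p) /\
  (forall p : Vrep F, in_subalg q D p <-> in_subalg q (Gt F) p).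
Proof.
move=> q0 qn hD0 hD.
have CG : forall i, in_subalg q (Gt F) (Cn q i.+1) := fun i => CinG q0 qn i.+1.
have GC : forall i, in_subalg q (Cn q) (Gt F i.+1) := fun i => GinC q0 qn i.+1.
have DG : forall i, in_subalg q (Gt F) (D i.+1) := fun i => DinG q0 hD0 hD i.+1.
have GD : forall i, in_subalg q D (Gt F i.+1) := fun i => GinD q0 hD0 hD i.+1.
split=> p; split=> H.
- apply: (ins_transfer q0 _ H) => i; exact: (ins_transfer q0 GD (CG i)).
- apply: (ins_transfer q0 _ H) => i; exact: (ins_transfer q0 GC (DG i)).
- exact: (ins_transfer q0 DG H).
- exact: (ins_transfer q0 GD H).
Qed.
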